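(* Let $m\ge 2$ be an integer and let $c>1$ be a real number which is not an integer. Then the sequence $x=(\lfloor n^c\rfloor \bmod m)_{n}$ is not normal. More precisely, there exist a positive integer $k$ and a block $B\in\{0,1,\ldots,m-1\}^k$ which does not appear in $x$ (i.e. there is no $n$ with $(x_n,x_{n+1},\ldots,x_{n+k-1})=B$).
   Context: A sequence $(v_n)_n$ with values in $\{0,1,\ldots,m-1\}$ is called $k$-normal if for every block $B\in\{0,\ldots,m-1\}^k$ one has $\lim_{N\to\infty}\frac1N\operatorname{Card}\{n<N: (v_n,\ldots,v_{n+k-1})=B\}=m^{-k}$; it is called normal if it is $k$-normal for every positive integer $k$. *)

(* Defs.v *)
From Stdlib Require Import Reals ZArith Arith List.
Open Scope R_scope.

(* n^c for a natural n and real exponent c, with the convention 0^c = 0 (c > 0). *)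
Definition npow (n : nat) (c : R) : R :=
  match n with O => 0 | S _ => Rpower (INR n) c end.

Definition rfloor (x : R) : Z := Int_part x.

Definition floor_pow_mod (m : nat) (c : R) (n : nat) : nat :=
  Z.to_nat (Z.modulo (rfloor (npow n c)) (Z.of_nat m)).

Definition occursb (v : nat -> nat) (B : list nat) (n : nat) : bool :=
  forallb (fun i => Nat.eqb (v (n + i)%nat) (nth i B 0%nat)) (seq 0 (length B)).

Definition block_count (v : nat -> nat) (B : list nat) (N : nat) : nat :=
  length (filter (occursb v B) (seq 0 N)).

Definition is_block (m k : nat) (B : list nat) : Prop :=
  length B = k /\ Forall (fun b => (b < m)%nat) B.

Definition k_normal (m k : nat) (v : nat -> nat) : Prop :=
  forall B, is_block m k B ->
    Un_cv (fun N => INR (block_count v B N) / INR N) (/ (INR m ^ k)).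

Definition normal (m : nat) (v : nat -> nat) : Prop :=
  forall k, (0 < k)%nat -> k_normal m k v.

(* Main.v *)
Require Import Defs.
From Stdlib Require Import Reals ZArith Arith List.
Open Scope R_scope.
From Stdlib Require Import Lia Lra Classical.
Import ListNotations.

Close Scope R_scope.

Fixpoint nchg (v : list bool) : nat :=
  match v with
  | x :: ((y :: _) as t) => (if Bool.eqb x y then 0 else 1) + nchg t
  | _ => 0
  end.

Lemma nchg_cons2 x y t : nchg (x :: y :: t) = (if Bool.eqb x y then 0 else 1) + nchg (y :: t).
Proof. reflexivity. Qed.

Lemma nchg_tri x z t : (nchg (x :: t) <= nchg (x :: z :: t))%nat.
Proof.
  destruct t as [|u t']; simpl; [lia|].
  destruct x, z, u; simpl; lia.
Qed.

Lemma nchg_cons_le x t : (nchg (x :: t) <= 1 + nchg t)%nat.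
Proof. destruct t as [|u t']; simpl; [lia|]. destruct (Bool.eqb x u); lia. Qed.

Lemma rolle_list : forall s t x,
  length t = length s ->
  (forall i, (i < length s)%nat -> nth i (x :: s) false <> nth i s false ->
       nth i t false = nth i s false) ->
  (nchg (x :: s) <= nchg (x :: t))%nat.
Proof.
  induction s as [|y s IH]; intros t x Hl H.
  - simpl. lia.
  - destruct t as [|z t']; [simpl in Hl; lia|].
    simpl in Hl. injection Hl as Hl.
    assert (Hs : forall i, (i < length s)%nat -> nth i (y :: s) false <> nth i s false ->
       nth i t' false = nth i s false).
    { intros i Hi Hne. apply (H (S i)); simpl; [lia|exact Hne]. }
    specialize (IH t' y Hl Hs).
    destruct (Bool.eqb x y) eqn:Exy.
    + apply Bool.eqb_prop in Exy; subst y.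
      rewrite nchg_cons2, Bool.eqb_reflx. simpl.
      eapply Nat.le_trans; [exact IH|]. apply nchg_tri.
    + assert (Hz : z = y).
      { specialize (H 0%nat). simpl in H. apply H; [lia|].
        intro E; subst; rewrite Bool.eqb_reflx in Exy; discriminate. }
      subst z. rewrite !nchg_cons2, Exy. lia.
Qed.

Lemma nchg_all_true v : (forall x, In x v -> x = true) -> nchg v = 0%nat.
Proof.
  induction v as [|x v IH]; intros H; [reflexivity|].
  destruct v as [|y v']; [reflexivity|].
  rewrite nchg_cons2. rewrite IH; [rewrite (H x (or_introl eq_refl)), (H y (or_intror (or_introl eq_refl))); reflexivity|].
  intros z Hz. apply H. right. exact Hz.
Qed.

Fixpoint Chg (r j : nat) {struct r} : list (list bool) :=
  match r with
  | O => [[]]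
  | S r' =>
    match r' with
    | O => [[true]; [false]]
    | _ => map (fun w => hd true w :: w) (Chg r' j) ++
           match j with
           | O => []
           | S j' => map (fun w => negb (hd true w) :: w) (Chg r' j')
           end
    end
  end.

Lemma Chg_in : forall r j v, length v = r -> (nchg v <= j)%nat -> In v (Chg r j).
Proof.
  induction r as [|r IH]; intros j v Hl Hc.
  - destruct v; [left; reflexivity|simpl in Hl; lia].
  - destruct v as [|x w]; [simpl in Hl; lia|]. simpl in Hl. injection Hl as Hl.
    destruct r as [|r0].
    + destruct w; [|simpl in Hl; lia]. destruct x; simpl; auto.
    + destruct w as [|y w']; [simpl in Hl; lia|].
      change (Chg (S (S r0)) j) with
        (map (fun w => hd true w :: w) (Chg (S r0) j) ++
           match j with
           | O => []
           | S j' => map (fun w => negb (hd true w) :: w) (Chg (S r0) j')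
           end).
      apply in_or_app.
      rewrite nchg_cons2 in Hc.
      destruct (Bool.eqb x y) eqn:E.
      * apply Bool.eqb_prop in E; subst x. left.
        change (y :: y :: w') with ((fun w => hd true w :: w) (y :: w')).
        apply in_map. apply IH; [exact Hl| lia].
      * right. destruct j as [|j']; [lia|].
        assert (x = negb y) by (destruct x, y; simpl in E; congruence || reflexivity).
        subst x.
        change (negb y :: y :: w') with ((fun w => negb (hd true w) :: w) (y :: w')).
        apply in_map. apply IH; [exact Hl| lia].
Qed.

Lemma Chg_len : forall r j, (1 <= r)%nat -> (length (Chg r j) <= 2 * r ^ j)%nat.
Proof.
  induction r as [|r IH]; intros j Hr; [lia|].
  destruct r as [|r0].
  - simpl. rewrite Nat.pow_1_l. lia.
  - change (Chg (S (S r0)) j) with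
        (map (fun w => hd true w :: w) (Chg (S r0) j) ++
           match j with
           | O => []
           | S j' => map (fun w => negb (hd true w) :: w) (Chg (S r0) j')
           end).
    rewrite length_app, length_map.
    destruct j as [|j'].
    + simpl. specialize (IH 0%nat). simpl in IH. lia.
    + rewrite length_map.
      pose proof (IH (S j') ltac:(lia)). pose proof (IH j' ltac:(lia)).
      assert (S r0 ^ S j' + S r0 ^ j' <= S (S r0) ^ S j')%nat.
      { rewrite (Nat.pow_succ_r' (S (S r0))), (Nat.pow_succ_r' (S r0)).
        pose proof (Nat.pow_le_mono_l (S r0) (S (S r0)) j' ltac:(lia)). nia. }
      lia.
Qed.

Fixpoint allb (n : nat) : list (list bool) :=
  match n with
  | O => [[]]
  | S n' => flat_map (fun v => [true :: v; false :: v]) (allb n')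
  end.

Lemma allb_len n : length (allb n) = (2 ^ n)%nat.
Proof.
  induction n as [|n IH]; [reflexivity|].
  simpl. rewrite flat_map_concat_map.
  rewrite length_concat. rewrite map_map. simpl.
  rewrite <- IH. clear IH. induction (allb n); simpl; lia.
Qed.

Lemma allb_in : forall n v, length v = n -> In v (allb n).
Proof.
  induction n as [|n IH]; intros v Hl.
  - destruct v; [left; reflexivity|simpl in Hl; lia].
  - destruct v as [|x w]; [simpl in Hl; lia|]. simpl in Hl.
    simpl. apply in_flat_map. exists w. split; [apply IH; lia|].
    destruct x; simpl; auto.
Qed.

Definition SegF (k0 R : nat) : list (list bool) :=
  map (fun u => firstn k0 u ++ false :: skipn k0 u) (allb (R - 1)).

Lemma SegF_len k0 R : length (SegF k0 R) = (2 ^ (R - 1))%nat.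
Proof. unfold SegF. rewrite length_map. apply allb_len. Qed.

Lemma split_at : forall k0 (v : list bool), (k0 < length v)%nat ->
  firstn k0 (firstn k0 v ++ skipn (S k0) v) ++ nth k0 v true :: skipn k0 (firstn k0 v ++ skipn (S k0) v) = v.
Proof.
  induction k0 as [|k IH]; intros v Hl.
  - destruct v as [|x w]; [simpl in Hl; lia|]. reflexivity.
  - destruct v as [|x w]; [simpl in Hl; lia|]. simpl in Hl |- *.
    f_equal. apply IH. lia.
Qed.

Lemma SegF_in k0 R v : length v = R -> (k0 < R)%nat -> nth k0 v true = false -> In v (SegF k0 R).
Proof.
  intros Hl Hk Hn. unfold SegF.
  pose proof (split_at k0 v ltac:(lia)) as Hu. rewrite Hn in Hu.
  rewrite <- Hu at 1.
  apply (in_map (fun u => firstn k0 u ++ false :: skipn k0 u)). apply allb_in.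
  rewrite length_app, length_firstn, length_skipn. lia.
Qed.

Fixpoint allZ (len K : nat) : list (list Z) :=
  match len with
  | O => [[]]
  | S l => flat_map (fun v => map (fun z => z :: v) (map Z.of_nat (seq 0 K))) (allZ l K)
  end.

Lemma allZ_len len K : length (allZ len K) = (K ^ len)%nat.
Proof.
  induction len as [|l IH]; [reflexivity|].
  simpl. rewrite flat_map_concat_map, length_concat, map_map.
  rewrite <- IH. clear IH. induction (allZ l K) as [|a r IHr]; simpl; [lia|].
  rewrite !length_map, length_seq. lia.
Qed.

Lemma allZ_in : forall len K v, length v = len ->
  (forall z, In z v -> (0 <= z < Z.of_nat K)%Z) -> In v (allZ len K).
Proof.
  induction len as [|l IH]; intros K v Hl Hz.
  - destruct v; [left; reflexivity|simpl in Hl; lia].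
  - destruct v as [|x w]; [simpl in Hl; lia|]. simpl in Hl.
    simpl. apply in_flat_map. exists w. split.
    + apply IH; [lia|]. intros z Hzz. apply Hz. right; auto.
    + assert (Hx := Hz x (or_introl eq_refl)).
      change (x :: w) with ((fun z => z :: w) x). apply in_map.
      replace x with (Z.of_nat (Z.to_nat x)) by lia. apply in_map.
      apply in_seq. lia.
Qed.

Fixpoint allN (len m : nat) : list (list nat) :=
  match len with
  | O => [[]]
  | S l => flat_map (fun v => map (fun z => z :: v) (seq 0 m)) (allN l m)
  end.

Lemma allN_len len m : length (allN len m) = (m ^ len)%nat.
Proof.
  induction len as [|l IH]; [reflexivity|].
  simpl. rewrite flat_map_concat_map, length_concat, map_map.
  rewrite <- IH. clear IH. induction (allN l m) as [|a r IHr]; simpl; [lia|].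
  rewrite !length_map, length_seq. lia.
Qed.

Lemma allN_prop : forall len m v, In v (allN len m) -> length v = len /\ (forall z, In z v -> (z < m)%nat).
Proof.
  induction len as [|l IH]; intros m v Hv.
  - simpl in Hv. destruct Hv as [<-|[]]. split; [reflexivity|]. intros z [].
  - simpl in Hv. apply in_flat_map in Hv. destruct Hv as [w [Hw Hin]].
    apply in_map_iff in Hin. destruct Hin as [z [<- Hz]]. apply in_seq in Hz.
    destruct (IH m w Hw) as [H1 H2]. split; [simpl; lia|].
    intros y [<-|Hy]; [lia|auto].
Qed.

Lemma allN_nodup : forall len m, NoDup (allN len m).
Proof.
  induction len as [|l IH]; intros m.
  - constructor; [intros []|constructor].
  - simpl. specialize (IH m). induction IH as [|w ws Hnin Hnd IH2].
    + constructor.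
    + simpl. apply NoDup_app.
      * apply NoDup_map_NoDup_ForallPairs; [intros a b _ _ E; congruence|apply seq_NoDup].
      * exact IH2.
      * intros x Hx1 Hx2. apply in_map_iff in Hx1. destruct Hx1 as [z [<- _]].
        apply in_flat_map in Hx2. destruct Hx2 as [w' [Hw' Hin]].
        apply in_map_iff in Hin. destruct Hin as [z' [E _]]. injection E as -> ->.
        contradiction.
Qed.

Lemma pigeon (len m : nat) (l : list (list nat)) :
  (length l < m ^ len)%nat -> exists v, In v (allN len m) /\ ~ In v l.
Proof.
  intros H. apply NNPP. intro Hn.
  assert (incl (allN len m) l).
  { intros v Hv. apply NNPP. intro Hv'. apply Hn. exists v. auto. }
  pose proof (NoDup_incl_length (allN_nodup len m) H0). rewrite allN_len in H1. lia.
Qed.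

Open Scope R_scope.

Fixpoint diffn (j : nat) (h : nat -> R) : nat -> R :=
  match j with
  | O => h
  | S j' => fun k => diffn j' h (S k) - diffn j' h k
  end.

Definition dif (h : nat -> R) : nat -> R := fun k => h (S k) - h k.

Lemma diffn_ext : forall j h1 h2, (forall k, h1 k = h2 k) -> forall k, diffn j h1 k = diffn j h2 k.
Proof. induction j; intros h1 h2 H k; simpl; [apply H|]. rewrite !(IHj h1 h2 H). reflexivity. Qed.

Lemma diffn_comm : forall j h k, diffn (S j) h k = diffn j (dif h) k.
Proof.
  induction j; intros h k; [reflexivity|].
  change (diffn (S (S j)) h k) with (diffn (S j) h (S k) - diffn (S j) h k).
  rewrite (IHj h (S k)), (IHj h k). reflexivity.
Qed.

Lemma diffn_minus : forall j f g k, diffn j (fun i => f i - g i) k = diffn j f k - diffn j g k.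
Proof. induction j; intros f g k; simpl; [reflexivity|]. rewrite !IHj. ring. Qed.

Lemma diffn_bound : forall j h k B, (forall i, (i <= j)%nat -> Rabs (h (k + i)%nat) <= B) ->
  Rabs (diffn j h k) <= 2 ^ j * B.
Proof.
  induction j; intros h k B H.
  - simpl. specialize (H 0%nat (le_n 0)). rewrite Nat.add_0_r in H. lra.
  - simpl.
    assert (H1 : Rabs (diffn j h (S k)) <= 2 ^ j * B).
    { apply IHj. intros i Hi. replace (S k + i)%nat with (k + S i)%nat by lia. apply H. lia. }
    assert (H2 : Rabs (diffn j h k) <= 2 ^ j * B).
    { apply IHj. intros i Hi. apply H. lia. }
    eapply Rle_trans; [apply Rabs_triang|]. rewrite Rabs_Ropp. lra.
Qed.

Fixpoint zdiffn (j : nat) (h : nat -> Z) : nat -> Z :=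
  match j with
  | O => h
  | S j' => fun k => (zdiffn j' h (S k) - zdiffn j' h k)%Z
  end.

Lemma diffn_IZR : forall j z k, diffn j (fun i => IZR (z i)) k = IZR (zdiffn j z k).
Proof. induction j; intros z k; simpl; [reflexivity|]. rewrite !IHj, minus_IZR. reflexivity. Qed.

Definition sgn (x : R) : bool := if Rle_dec 0 x then true else false.

Fixpoint sgnl (h : nat -> R) (a len : nat) : list bool :=
  match len with
  | O => []
  | S l => sgn (h a) :: sgnl h (S a) l
  end.

Lemma sgnl_len h a len : length (sgnl h a len) = len.
Proof. revert a; induction len; intros a; simpl; auto. Qed.

Lemma sgnl_nth : forall len h a i d, (i < len)%nat -> nth i (sgnl h a len) d = sgn (h (a + i)%nat).
Proof.
  induction len; intros h a i d Hi; [lia|].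
  destruct i; simpl; [rewrite Nat.add_0_r; reflexivity|].
  rewrite IHlen by lia. replace (a + S i)%nat with (S a + i)%nat by lia; reflexivity.
Qed.

Lemma sign_chg : forall j h a len,
  (forall i, (i + j < len)%nat -> 0 <= diffn j h (a + i)%nat) ->
  (nchg (sgnl h a len) <= j)%nat.
Proof.
  induction j; intros h a len H.
  - rewrite nchg_all_true; [lia|].
    intros x Hx. apply (In_nth _ _ false) in Hx. destruct Hx as [i [Hi <-]].
    rewrite sgnl_len in Hi. rewrite sgnl_nth by lia.
    unfold sgn. destruct (Rle_dec 0 (h (a + i)%nat)) as [|n]; [reflexivity|].
    exfalso. apply n. specialize (H i ltac:(lia)). exact H.
  - destruct len as [|len]; [simpl; lia|].
    assert (IH : (nchg (sgnl (dif h) a len) <= j)%nat).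
    { apply IHj. intros i Hi. rewrite <- diffn_comm. apply H. lia. }
    change (sgnl h a (S len)) with (sgn (h a) :: sgnl h (S a) len).
    eapply Nat.le_trans.
    + apply (rolle_list (sgnl h (S a) len) (sgnl (dif h) a len)).
      * rewrite !sgnl_len. reflexivity.
      * intros i Hi Hne. rewrite sgnl_len in Hi.
        change (sgn (h a) :: sgnl h (S a) len) with (sgnl h a (S len)) in Hne.
        rewrite !sgnl_nth in Hne by lia. rewrite !sgnl_nth by lia.
        unfold dif. replace (S a + i)%nat with (S (a + i)) in * by lia.
        unfold sgn in *.
        destruct (Rle_dec 0 (h (a + i)%nat)), (Rle_dec 0 (h (S (a + i)))),
          (Rle_dec 0 (h (S (a + i)) - h (a + i)%nat));
          try reflexivity; try congruence; lra.
    + eapply Nat.le_trans; [apply nchg_cons_le|]. lia.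
Qed.


Fixpoint tab (d : nat) (q : nat -> Z) (k : nat) : nat -> Z :=
  match k with
  | O => q
  | S k' => fun i => if Nat.ltb i d then (tab d q k' i + tab d q k' (S i))%Z else tab d q k' i
  end.

Lemma tab_lin d a b K : forall k i,
  tab d (fun i => (a i + K * b i)%Z) k i = (tab d a k i + K * tab d b k i)%Z.
Proof.
  induction k; intros i; simpl; [reflexivity|].
  destruct (Nat.ltb i d); rewrite ?IHk; lia.
Qed.

Lemma tab_ext d q1 q2 : (forall i, (i <= d)%nat -> q1 i = q2 i) ->
  forall k i, (i <= d)%nat -> tab d q1 k i = tab d q2 k i.
Proof.
  intros H. induction k; intros i Hi; simpl; [auto|].
  destruct (Nat.ltb i d) eqn:E.
  - apply Nat.ltb_lt in E. rewrite !IHk by lia. reflexivity.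
  - apply IHk; lia.
Qed.

Lemma pow_step (x : R) (p : nat) : 0 <= x ->
  x ^ S p + x ^ p <= (x + 1) ^ S p.
Proof.
  intros Hx. simpl.
  assert (x ^ p <= (x + 1) ^ p) by (apply pow_incr; lra).
  assert (0 <= x ^ p) by (apply pow_le; lra).
  nra.
Qed.

Lemma approx (d : nat) (G : nat -> R) (Mr tau : R) (K : nat) :
  0 < Mr -> 0 <= tau -> (forall j, (j < K)%nat -> Rabs (diffn (S d) G j) <= tau) ->
  forall k, (k <= K)%nat -> forall i, (i <= d)%nat ->
  Rabs (diffn i G k - IZR (tab d (fun i => Int_part (Mr * diffn i G 0)) k i) / Mr)
     <= (INR (k+1)) ^ (d - i) * (/ Mr + INR k * tau).
Proof.
  intros HM Ht HG. set (q := fun i => Int_part (Mr * diffn i G 0)).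
  induction k; intros Hk i Hi.
  - simpl. unfold q. destruct (base_Int_part (Mr * diffn i G 0)) as [H1 H2].
    rewrite pow1. rewrite Rmult_1_l, Rmult_0_l, Rplus_0_r.
    assert (Hx : diffn i G 0 - IZR (Int_part (Mr * diffn i G 0)) / Mr =
                 (Mr * diffn i G 0 - IZR (Int_part (Mr * diffn i G 0))) / Mr)
      by (field; lra).
    rewrite Hx. rewrite Rabs_pos_eq.
    + unfold Rdiv. assert (0 < / Mr) by (apply Rinv_0_lt_compat; lra). nra.
    + unfold Rdiv. assert (0 < / Mr) by (apply Rinv_0_lt_compat; lra). nra.
  - assert (IHk' := IHk ltac:(lia)).
    assert (HX : 0 <= / Mr + INR k * tau).
    { assert (0 < / Mr) by (apply Rinv_0_lt_compat; lra). pose proof (pos_INR k). nra. }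
    assert (HXm : / Mr + INR k * tau + tau = / Mr + INR (S k) * tau) by (rewrite S_INR; ring).
    simpl tab.
    destruct (Nat.ltb i d) eqn:E.
    + apply Nat.ltb_lt in E.
      assert (Hs : diffn i G (S k) = diffn i G k + diffn (S i) G k) by (simpl; ring).
      rewrite Hs, plus_IZR.
      assert (A1 := IHk' i ltac:(lia)). assert (A2 := IHk' (S i) ltac:(lia)).
      replace (diffn i G k + diffn (S i) G k - (IZR (tab d q k i) + IZR (tab d q k (S i))) / Mr)
        with ((diffn i G k - IZR (tab d q k i) / Mr) + (diffn (S i) G k - IZR (tab d q k (S i)) / Mr))
        by (field; lra).
      eapply Rle_trans; [apply Rabs_triang|].
      replace (d - i)%nat with (S (d - S i)) in * by lia.
      assert (P := pow_step (INR (k + 1)) (d - S i) (pos_INR _)).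
      replace (INR (k+1) + 1) with (INR (S k + 1)) in P by (rewrite !plus_INR, S_INR; ring).
      assert (Hpos : 0 <= INR (k+1) ^ (d - S i)) by (apply pow_le, pos_INR).
      assert (HXle : / Mr + INR k * tau <= / Mr + INR (S k) * tau) by lra.
      assert (0 <= INR (S k + 1) ^ S (d - S i)) by (apply pow_le, pos_INR).
      nra.
    + apply Nat.ltb_ge in E. assert (i = d) by lia. subst i.
      assert (Hs : diffn d G (S k) = diffn d G k + diffn (S d) G k) by (simpl; ring).
      rewrite Hs. rewrite Nat.sub_diag in *. rewrite pow_O in *.
      assert (A1 := IHk' d ltac:(lia)). rewrite Nat.sub_diag, pow_O in A1.
      assert (A2 := HG k ltac:(lia)).
      replace (diffn d G k + diffn (S d) G k - IZR (tab d q k d) / Mr)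
        with ((diffn d G k - IZR (tab d q k d) / Mr) + diffn (S d) G k) by ring.
      eapply Rle_trans; [apply Rabs_triang|]. lra.
Qed.


Fixpoint rdiffn (j : nat) (f : R -> R) : R -> R :=
  match j with
  | O => f
  | S j' => fun x => rdiffn j' f (x + 1) - rdiffn j' f x
  end.

Lemma seq_real : forall j f n k, diffn j (fun k => f (INR (n + k))) k = rdiffn j f (INR (n + k)).
Proof.
  induction j; intros f n k; simpl; [reflexivity|].
  rewrite !IHj. replace (n + S k)%nat with (S (n + k)) by lia. rewrite S_INR. reflexivity.
Qed.

Lemma rdiffn_deriv : forall j Fa Fb, (forall t, 0 < t -> derivable_pt_lim Fa t (Fb t)) ->
  forall x, 0 < x -> derivable_pt_lim (rdiffn j Fa) x (rdiffn j Fb x).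
Proof.
  induction j; intros Fa Fb H x Hx; simpl; [auto|].
  apply (derivable_pt_lim_minus (fun x => rdiffn j Fa (x + 1)) (rdiffn j Fa)).
  - assert (D1 : derivable_pt_lim (fun x => x + 1) x 1).
    { change (derivable_pt_lim (plus_fct id (fct_cte 1)) x 1).
      replace 1 with (1 + 0) at 2 by ring. apply derivable_pt_lim_plus;
      [apply derivable_pt_lim_id|apply derivable_pt_lim_const]. }
    replace (rdiffn j Fb (x + 1)) with (rdiffn j Fb (x + 1) * 1) by ring.
    apply (derivable_pt_lim_comp (fun x => x + 1) (rdiffn j Fa)); [exact D1|].
    apply IHj; [exact H|lra].
  - apply IHj; auto.
Qed.

Lemma mvt_chain : forall j (Fi : nat -> R -> R),
  (forall i t, 0 < t -> derivable_pt_lim (Fi i) t (Fi (S i) t)) ->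
  forall x, 0 < x -> exists xi, x <= xi <= x + INR j /\ rdiffn j (Fi 0%nat) x = Fi j xi.
Proof.
  induction j; intros Fi H x Hx.
  - exists x. simpl. split; [lra|reflexivity].
  - cbn [rdiffn].
    destruct (MVT_cor2 (rdiffn j (Fi 0%nat)) (rdiffn j (Fi 1%nat)) x (x + 1)) as [eta [He1 He2]].
    + lra.
    + intros t Ht. apply rdiffn_deriv; [|lra]. intros u Hu. apply H; auto.
    + destruct (IHj (fun i => Fi (S i)) (fun i t Ht => H (S i) t Ht) eta ltac:(lra)) as [xi [Hxi1 Hxi2]].
      exists xi. split.
      * rewrite S_INR. lra.
      * rewrite He1. replace (x + 1 - x) with 1 by ring. rewrite Rmult_1_r. exact Hxi2.
Qed.

Fixpoint ff (c : R) (i : nat) : R :=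
  match i with
  | O => 1
  | S i' => ff c i' * (c - INR i')
  end.

Definition Fc (c : R) (i : nat) (t : R) : R := ff c i * Rpower t (c - INR i).

Lemma Fc_deriv c i t : 0 < t -> derivable_pt_lim (Fc c i) t (Fc c (S i) t).
Proof.
  intros Ht. unfold Fc.
  replace (ff c (S i) * Rpower t (c - INR (S i))) with
    (ff c i * ((c - INR i) * Rpower t (c - INR i - 1))).
  - apply (derivable_pt_lim_scal (fun t => Rpower t (c - INR i))). apply derivable_pt_lim_power; auto.
  - rewrite S_INR. cbn [ff]. replace (c - (INR i + 1)) with (c - INR i - 1) by ring. ring.
Qed.

Lemma ff_pos c d : INR d < c -> forall i, (i <= S d)%nat -> 0 < ff c i.
Proof.
  intros Hc. induction i; intros Hi; simpl; [lra|].
  apply Rmult_lt_0_compat; [apply IHi; lia|].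
  assert (INR i <= INR d) by (apply le_INR; lia). lra.
Qed.

Lemma exp_le_mono x y : x <= y -> exp x <= exp y.
Proof. intros H. destruct (Rle_lt_or_eq_dec x y H) as [h|h]; [left; apply exp_increasing; auto|subst; lra]. Qed.

Lemma ln_le x y : 0 < x -> x <= y -> ln x <= ln y.
Proof. intros H0 H. destruct (Rle_lt_or_eq_dec x y H) as [h|h]; [left; apply ln_increasing; auto|subst; lra]. Qed.

Lemma Rpower_anti (x y e : R) : 0 < x -> x <= y -> e < 0 -> Rpower y e <= Rpower x e.
Proof.
  intros Hx Hxy He. unfold Rpower. apply exp_le_mono.
  assert (ln x <= ln y) by (apply ln_le; lra). nra.
Qed.

Lemma Rpower_small (e K tau : R) : e < 0 -> 0 < K -> 0 < tau ->
  exists X, 0 < X /\ forall x, X <= x -> K * Rpower x e <= tau.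
Proof.
  intros He HK Ht. exists (exp (ln (tau / K) / e)). split; [apply exp_pos|].
  intros x Hx.
  assert (Hx0 : 0 < x) by (pose proof (exp_pos (ln (tau / K) / e)); lra).
  assert (Hl : ln (tau / K) / e <= ln x).
  { rewrite <- (ln_exp (ln (tau / K) / e)). apply ln_le; [apply exp_pos|lra]. }
  assert (Hl2 : e * ln x <= ln (tau / K)).
  { assert (e * ln x <= e * (ln (tau / K) / e)) by nra.
    replace (e * (ln (tau / K) / e)) with (ln (tau / K)) in H by (field; lra). lra. }
  unfold Rpower. assert (exp (e * ln x) <= tau / K).
  { rewrite <- (exp_ln (tau / K)) by (apply Rdiv_lt_0_compat; lra). apply exp_le_mono. lra. }
  apply (Rmult_le_compat_l K) in H; [|lra]. replace (K * (tau / K)) with tau in H by (field; lra).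
  lra.
Qed.

Lemma analytic (c : R) (d : nat) : INR d < c -> c < INR d + 1 ->
  forall tau, 0 < tau -> exists N0 : nat, (1 <= N0)%nat /\
    forall n, (N0 <= n)%nat -> forall j,
      0 < diffn (S d) (fun k => npow (n + k) c) j <= tau.
Proof.
  intros Hc1 Hc2 tau Ht.
  set (e := c - INR (S d)).
  assert (He : e < 0) by (unfold e; rewrite S_INR; lra).
  assert (Hff : 0 < ff c (S d)) by (apply (ff_pos c d); auto).
  destruct (Rpower_small e (ff c (S d)) tau He Hff Ht) as [X [HX0 HX]].
  destruct (archimed X) as [Hup _].
  set (N0 := (Z.to_nat (up X) + 1)%nat).
  assert (HN0 : X <= INR N0).
  { unfold N0. rewrite plus_INR. rewrite INR_IZR_INZ. rewrite Z2Nat.id.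
    - simpl. lra.
    - apply le_IZR. lra. }
  exists N0. split; [unfold N0; lia|].
  intros n Hn j.
  assert (Hext : forall k, npow (n + k) c = Fc c 0 (INR (n + k))).
  { intros k. unfold npow, Fc. simpl. destruct (n + k)%nat eqn:E; [lia|].
    rewrite Rminus_0_r, Rmult_1_l. reflexivity. }
  rewrite (diffn_ext _ _ _ Hext). rewrite seq_real.
  assert (Hx : 0 < INR (n + j)).
  { apply lt_0_INR. unfold N0 in Hn. lia. }
  destruct (mvt_chain (S d) (Fc c) (Fc_deriv c) (INR (n + j)) Hx) as [xi [Hxi Heq]].
  rewrite Heq. unfold Fc. fold e. split.
  - apply Rmult_lt_0_compat; [exact Hff|]. unfold Rpower; apply exp_pos.
  - assert (Hle : Rpower xi e <= Rpower (INR (n + j)) e) by (apply Rpower_anti; lra).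
    assert (INR N0 <= INR (n + j)) by (apply le_INR; lia).
    specialize (HX (INR (n + j)) ltac:(lra)).
    apply (Rmult_le_compat_l (ff c (S d))) in Hle; lra.
Qed.


Lemma Rabs_le_inv (a b : R) : Rabs a <= b -> - b <= a <= b.
Proof. unfold Rabs. destruct (Rcase_abs a); lra. Qed.

Lemma Int_part_unique (x : R) (z : Z) : IZR z <= x < IZR z + 1 -> Int_part x = z.
Proof.
  intros [H1 H2]. destruct (base_Int_part x) as [A1 A2].
  assert (E1 : (z < Int_part x + 1)%Z) by (apply lt_IZR; rewrite plus_IZR; simpl; lra).
  assert (E2 : (Int_part x < z + 1)%Z) by (apply lt_IZR; rewrite plus_IZR; simpl; lra).
  lia.
Qed.

Lemma Int_part_mono (x y : R) : x <= y -> (Int_part x <= Int_part y)%Z.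
Proof.
  intros H. destruct (base_Int_part x) as [A1 A2]. destruct (base_Int_part y) as [B1 B2].
  assert (E : (Int_part x < Int_part y + 1)%Z) by (apply lt_IZR; rewrite plus_IZR; simpl; lra).
  lia.
Qed.

Lemma Int_part_IZR (z : Z) : Int_part (IZR z) = z.
Proof. apply Int_part_unique. lra. Qed.

Lemma Int_part_shift (x : R) (z : Z) : Int_part (x + IZR z) = (Int_part x + z)%Z.
Proof.
  apply Int_part_unique. destruct (base_Int_part x) as [A1 A2]. rewrite plus_IZR. lra.
Qed.

Lemma amb_analysis (p W Hx : R) : 0 < W -> 2 * W < 1 -> Rabs (Hx - p) <= W ->
  let cc := Int_part (p + W) in let lo := Int_part (p - W) in
  (lo = cc -> Int_part Hx = cc) /\
  (lo <> cc -> p - W < IZR cc <= p + W /\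
     Int_part Hx = (if Rle_dec (IZR cc) Hx then cc else cc - 1)%Z).
Proof.
  intros HW HW2 Habs cc lo.
  apply Rabs_le_inv in Habs.
  destruct (base_Int_part (p + W)) as [C1 C2]. destruct (base_Int_part (p - W)) as [L1 L2].
  fold cc in C1, C2. fold lo in L1, L2.
  assert (Hlc : (lo <= cc)%Z) by (apply Int_part_mono; lra).
  assert (Hcl : (cc - 1 < lo + 1)%Z) by (apply lt_IZR; rewrite plus_IZR, minus_IZR; simpl; lra).
  assert (Hm1 : (lo <= Int_part Hx)%Z) by (apply Int_part_mono; lra).
  assert (Hm2 : (Int_part Hx <= cc)%Z) by (apply Int_part_mono; lra).
  split.
  - intros E. lia.
  - intros E. assert (Elo : lo = (cc - 1)%Z) by lia.
    split.
    + split; [|lra]. rewrite Elo, minus_IZR in L2. simpl in L2. lra.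
    + destruct (Rle_dec (IZR cc) Hx) as [h|h].
      * assert ((cc <= Int_part Hx)%Z) by (rewrite <- (Int_part_IZR cc) at 1; apply Int_part_mono; lra). lia.
      * destruct (base_Int_part Hx) as [X1 X2].
        assert ((Int_part Hx < cc)%Z) by (apply lt_IZR; lra). lia.
Qed.


Definition L (Rs T : nat) := (Rs * T)%nat.

Definition pk (d M : nat) (D : list Z) (k : nat) : R := IZR (tab d (fun i => nth i D 0%Z) k 0) / INR M.
Definition cc (d M : nat) (W : R) (D : list Z) (k : nat) : Z := Int_part (pk d M D k + W).
Definition amb (d M : nat) (W : R) (D : list Z) (k : nat) : bool := negb (Z.eqb (Int_part (pk d M D k - W)) (cc d M W D k)).
Definition digitf (m d M : nat) (W : R) (D : list Z) (k : nat) (b : bool) : nat :=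
  Z.to_nat (Z.modulo (if andb (amb d M W D k) (negb b) then (cc d M W D k - 1)%Z else cc d M W D k) (Z.of_nat m)).

Definition blockOf (m d Rs T M : nat) (W : R) (D : list Z) (bv : list bool) : list nat :=
  map (fun k => digitf m d M W D k (nth k bv false)) (seq 0 (L Rs T)).

Definition SegL (d Rs M : nat) (W : R) (D : list Z) (s : nat) : list (list bool) :=
  if forallb (fun i => amb d M W D (s * Rs + i)) (seq 0 Rs) then Chg Rs (S d)
  else SegF (match find (fun i => negb (amb d M W D (s * Rs + i))) (seq 0 Rs) with Some i => i | None => 0%nat end) Rs.

Fixpoint ProdL (d Rs M : nat) (W : R) (D : list Z) (t : nat) : list (list bool) :=
  match t with
  | O => [[]]
  | S t' => flat_map (fun pre => map (fun v => pre ++ v) (SegL d Rs M W D t')) (ProdL d Rs M W D t')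
  end.

Definition BigList (m d Rs T M : nat) (W : R) : list (list nat) :=
  flat_map (fun D => map (blockOf m d Rs T M W D) (ProdL d Rs M W D T)) (allZ (S d) (m * M)).

Lemma SegL_len d Rs M W D s : (1 <= Rs)%nat -> (2 * Rs ^ S d <= 2 ^ (Rs - 1))%nat ->
  (length (SegL d Rs M W D s) <= 2 ^ (Rs - 1))%nat.
Proof.
  intros H1 H2. unfold SegL. destruct (forallb _ _).
  - pose proof (Chg_len Rs (S d) H1). lia.
  - rewrite SegF_len. lia.
Qed.

Lemma ProdL_len d Rs M W D : (1 <= Rs)%nat -> (2 * Rs ^ S d <= 2 ^ (Rs - 1))%nat ->
  forall t, (length (ProdL d Rs M W D t) <= (2 ^ (Rs - 1)) ^ t)%nat.
Proof.
  intros H1 H2. induction t; simpl; [lia|].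
  rewrite flat_map_concat_map, length_concat, map_map.
  assert (forall l : list (list bool), (list_sum (map (fun x => length (map (fun v => x ++ v) (SegL d Rs M W D t))) l)
            <= length l * 2 ^ (Rs - 1))%nat).
  { induction l; simpl; [lia|]. rewrite length_map. pose proof (SegL_len d Rs M W D t H1 H2). lia. }
  eapply Nat.le_trans; [apply H|]. rewrite Nat.mul_comm. apply Nat.mul_le_mono_l. exact IHt.
Qed.

Lemma BigList_len m d Rs T M W : (1 <= Rs)%nat -> (2 * Rs ^ S d <= 2 ^ (Rs - 1))%nat ->
  (length (BigList m d Rs T M W) <= (m * M) ^ S d * (2 ^ (Rs - 1)) ^ T)%nat.
Proof.
  intros H1 H2. unfold BigList. rewrite flat_map_concat_map, length_concat, map_map.
  rewrite <- (allZ_len (S d) (m * M)).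
  generalize (allZ (S d) (m * M)). induction l; simpl; [lia|].
  rewrite length_map. pose proof (ProdL_len d Rs M W a H1 H2 T). lia.
Qed.



Lemma nth_map_seq {A} (f : nat -> A) n i dflt : (i < n)%nat -> nth i (map f (seq 0 n)) dflt = f i.
Proof.
  intros H. rewrite (nth_indep _ dflt (f 0%nat)) by (rewrite length_map, length_seq; lia).
  rewrite map_nth, seq_nth by lia. reflexivity.
Qed.

Lemma map_seq_shift {A} (f : nat -> A) a : forall n b, map f (seq (a + b) n) = map (fun i => f (a + i)%nat) (seq b n).
Proof.
  induction n; intros b; simpl; [reflexivity|]. f_equal. replace (S (a + b)) with (a + S b)%nat by lia. apply IHn.
Qed.

Lemma sgnl_map h a len : sgnl h a len = map (fun i => sgn (h (a + i)%nat)) (seq 0 len).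
Proof.
  rewrite <- (map_seq_shift (fun k => sgn (h k)) a len 0). rewrite Nat.add_0_r.
  revert a; induction len; intros a; simpl; [reflexivity|]. f_equal. apply IHlen.
Qed.

Lemma IZR_small (z : Z) : Rabs (IZR z) < 1 -> z = 0%Z.
Proof.
  intros H. apply Rabs_def2 in H. destruct H as [H1 H2].
  assert (z < 1)%Z by (apply lt_IZR; simpl; lra).
  assert (-1 < z)%Z by (apply lt_IZR; simpl; lra). lia.
Qed.

Lemma large_block (m d Rs T M : nat) (W tau : R) (G : nat -> R) :
  (1 <= m)%nat -> (1 <= M)%nat -> 0 < W -> 2 * W < 1 -> 0 <= tau ->
  2 ^ (S d) * (2 * W) + tau < 1 ->
  (forall k, (k < L Rs T)%nat -> INR (k+1) ^ d * (/ INR M + INR k * tau) <= W) ->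
  (forall j, 0 <= diffn (S d) G j <= tau) ->
  In (map (fun k => Z.to_nat (Int_part (G k) mod Z.of_nat m)) (seq 0 (L Rs T))) (BigList m d Rs T M W).
Proof.
  intros Hm HM HW HW2 Ht Hsm HWk HG.
  set (LL := L Rs T).
  set (mM := (Z.of_nat m * Z.of_nat M)%Z).
  assert (HmM : (0 < mM)%Z) by (unfold mM; lia).
  set (q := fun i => Int_part (INR M * diffn i G 0)).
  set (qb := fun i => (q i mod mM)%Z).
  set (tq := fun i => (q i / mM)%Z).
  set (D := map qb (seq 0 (S d))).
  assert (HD : In D (allZ (S d) (m * M))).
  { apply allZ_in. - unfold D. rewrite length_map, length_seq. reflexivity.
    - intros z Hz. unfold D in Hz. apply in_map_iff in Hz. destruct Hz as [i [<- _]].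
      unfold qb. rewrite Nat2Z.inj_mul. fold mM. apply Z.mod_pos_bound. exact HmM. }
  assert (Hnth : forall i, (i <= d)%nat -> nth i D 0%Z = qb i).
  { intros i Hi. unfold D. apply nth_map_seq. lia. }
  set (Tk := fun k => tab d tq k 0).
  assert (Htab : forall k, tab d q k 0 = (tab d (fun i => nth i D 0%Z) k 0 + mM * Tk k)%Z).
  { intros k. unfold Tk.
    rewrite (tab_ext d q (fun i => (qb i + mM * tq i)%Z)).
    - rewrite tab_lin. f_equal. apply tab_ext; [|lia]. intros i Hi. symmetry. apply Hnth. exact Hi.
    - intros i Hi. unfold qb, tq. pose proof (Z_div_mod_eq_full (q i) mM). lia.
    - lia. }
  assert (HMr : 0 < INR M) by (apply lt_0_INR; lia).
  assert (Happ : forall k, (k < LL)%nat -> Rabs (G k - IZR (tab d q k 0) / INR M) <= W).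
  { intros k Hk.
    pose proof (approx d G (INR M) tau LL HMr Ht) as A.
    assert (Hb : forall j, (j < LL)%nat -> Rabs (diffn (S d) G j) <= tau).
    { intros j _. destruct (HG j). rewrite Rabs_pos_eq; lra. }
    specialize (A Hb k ltac:(lia) 0%nat ltac:(lia)). simpl diffn in A. rewrite Nat.sub_0_r in A.
    eapply Rle_trans; [exact A|]. apply HWk. exact Hk. }
  set (H := fun k => G k - IZR (Z.of_nat m * Tk k)).
  assert (HH : forall k, (k < LL)%nat -> Rabs (H k - pk d M D k) <= W).
  { intros k Hk. unfold H, pk.
    replace (G k - IZR (Z.of_nat m * Tk k) - IZR (tab d (fun i => nth i D 0%Z) k 0) / INR M)
      with (G k - IZR (tab d q k 0) / INR M); [apply Happ; exact Hk|].
    rewrite Htab. rewrite plus_IZR. unfold mM. rewrite !mult_IZR.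
    rewrite <- !INR_IZR_INZ. field. lra. }
  assert (Hfl : forall k, Int_part (G k) = (Int_part (H k) + Z.of_nat m * Tk k)%Z).
  { intros k. rewrite <- Int_part_shift. f_equal. unfold H. ring. }
  set (c' := fun k => (cc d M W D k + Z.of_nat m * Tk k)%Z).
  set (b := fun k => sgn (G k - IZR (c' k))).
  set (bvf := fun k => andb (amb d M W D k) (b k)).
  set (bv := map bvf (seq 0 LL)).
  assert (Hdig : forall k, (k < LL)%nat ->
     digitf m d M W D k (nth k bv false) = Z.to_nat (Int_part (G k) mod Z.of_nat m)).
  { intros k Hk. unfold bv. rewrite nth_map_seq by exact Hk.
    rewrite Hfl. rewrite (Z.mul_comm (Z.of_nat m)). rewrite Z.mod_add by lia.
    destruct (amb_analysis (pk d M D k) W (H k) HW HW2 (HH k Hk)) as [A1 A2].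
    unfold digitf, bvf, amb. fold (cc d M W D k) in A1, A2 |- *.
    destruct (Z.eqb_spec (Int_part (pk d M D k - W)) (cc d M W D k)) as [E|E].
    - simpl. rewrite (A1 E). reflexivity.
    - simpl. destruct (A2 E) as [_ A3]. rewrite A3.
      unfold b, c', sgn. rewrite plus_IZR.
      destruct (Rle_dec (IZR (cc d M W D k)) (H k)) as [h|h];
      destruct (Rle_dec 0 (G k - (IZR (cc d M W D k) + IZR (Z.of_nat m * Tk k)))) as [h'|h'];
      unfold H in h; simpl; try reflexivity; exfalso; lra. }
  assert (Hblk : map (fun k => Z.to_nat (Int_part (G k) mod Z.of_nat m)) (seq 0 LL) = blockOf m d Rs T M W D bv).
  { unfold blockOf. apply map_ext_in. intros k Hk. apply in_seq in Hk. symmetry. apply Hdig. lia. }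
  assert (Hamb : forall k, (k < LL)%nat -> amb d M W D k = true -> Rabs (IZR (c' k) - G k) <= 2 * W).
  { intros k Hk Ha. unfold amb in Ha.
    destruct (amb_analysis (pk d M D k) W (H k) HW HW2 (HH k Hk)) as [_ A2].
    fold (cc d M W D k) in A2.
    destruct (Z.eqb_spec (Int_part (pk d M D k - W)) (cc d M W D k)) as [E|E]; [discriminate|].
    destruct (A2 E) as [[B1 B2] _]. pose proof (Rabs_le_inv _ _ (HH k Hk)).
    unfold c'. rewrite plus_IZR. unfold H in *. apply Rabs_le. lra. }
  assert (Hseg : forall t, (t < T)%nat -> In (map bvf (seq (Rs * t) Rs)) (SegL d Rs M W D t)).
  { intros t Ht'.
    assert (Hsh : map bvf (seq (Rs * t) Rs) = map (fun i => bvf (t * Rs + i)%nat) (seq 0 Rs)).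
    { rewrite <- (Nat.add_0_r (Rs * t)) at 1. rewrite map_seq_shift. rewrite Nat.mul_comm. reflexivity. }
    assert (HLt : forall i, (i < Rs)%nat -> (t * Rs + i < LL)%nat).
    { intros i Hi. unfold LL, L. nia. }
    rewrite Hsh. unfold SegL.
    destruct (forallb (fun i => amb d M W D (t * Rs + i)) (seq 0 Rs)) eqn:Ef.
    - rewrite forallb_forall in Ef.
      assert (Ha : forall i, (i < Rs)%nat -> amb d M W D (t * Rs + i) = true).
      { intros i Hi. apply Ef. apply in_seq. lia. }
      set (h := fun k => G k - IZR (c' k)).
      assert (Heq : map (fun i => bvf (t * Rs + i)%nat) (seq 0 Rs) = sgnl h (t * Rs) Rs).
      { rewrite sgnl_map. apply map_ext_in. intros i Hi. apply in_seq in Hi.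
        unfold bvf. rewrite Ha by lia. reflexivity. }
      rewrite Heq. apply Chg_in; [apply sgnl_len|].
      apply sign_chg. intros i Hi.
      unfold h. rewrite diffn_minus. rewrite diffn_IZR.
      set (z := zdiffn (S d) c' (t * Rs + i)).
      assert (Hz : z = 0%Z).
      { apply IZR_small. unfold z. rewrite <- diffn_IZR.
        assert (E : diffn (S d) (fun k => IZR (c' k)) (t * Rs + i) =
                    diffn (S d) (fun k => IZR (c' k) - G k) (t * Rs + i) + diffn (S d) G (t * Rs + i)).
        { rewrite diffn_minus. ring. }
        rewrite E.
        assert (B1 : Rabs (diffn (S d) (fun k => IZR (c' k) - G k) (t * Rs + i)) <= 2 ^ S d * (2 * W)).
        { apply diffn_bound. intros i' Hi'. rewrite <- Nat.add_assoc. apply Hamb.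
          - apply HLt. lia.
          - apply Ha. lia. }
        destruct (HG (t * Rs + i)%nat).
        eapply Rle_lt_trans; [apply Rabs_triang|]. rewrite (Rabs_pos_eq (diffn (S d) G _)) by lra. lra. }
      rewrite Hz. destruct (HG (t * Rs + i)%nat). simpl IZR. lra.
    - destruct (find (fun i => negb (amb d M W D (t * Rs + i))) (seq 0 Rs)) as [i0|] eqn:Efind.
      + apply find_some in Efind. destruct Efind as [Hi0 Hn]. apply in_seq in Hi0.
        apply SegF_in; [rewrite length_map, length_seq; reflexivity|lia|].
        rewrite nth_map_seq by lia. unfold bvf. apply Bool.negb_true_iff in Hn. rewrite Hn. reflexivity.
      + exfalso. assert (forallb (fun i => amb d M W D (t * Rs + i)) (seq 0 Rs) = true).
        { apply forallb_forall. intros x Hx. pose proof (find_none _ _ Efind x Hx). simpl in H0.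
          apply Bool.negb_false_iff. exact H0. }
        congruence. }
  assert (Hprod : forall t, (t <= T)%nat -> In (map bvf (seq 0 (Rs * t))) (ProdL d Rs M W D t)).
  { induction t; intros Ht'.
    - rewrite Nat.mul_0_r. simpl. left. reflexivity.
    - replace (Rs * S t)%nat with (Rs * t + Rs)%nat by lia.
      rewrite seq_app, map_app. simpl ProdL. apply in_flat_map.
      exists (map bvf (seq 0 (Rs * t))). split; [apply IHt; lia|].
      apply in_map. apply Hseg. lia. }
  rewrite Hblk. unfold BigList. apply in_flat_map. exists D. split; [exact HD|].
  apply in_map. unfold bv, LL, L. apply Hprod. lia.
Qed.


Lemma sq_le_pow2 : forall s, (4 <= s)%nat -> (s * s <= 2 ^ s)%nat.
Proof.
  intros s Hs. induction Hs; [simpl; lia|].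
  rewrite Nat.pow_succ_r'. nia.
Qed.

Lemma lt_pow2 : forall K, (K < 2 ^ K)%nat.
Proof. induction K; simpl; lia. Qed.

Lemma choose_R d : exists Rs, (1 <= Rs)%nat /\ (2 * Rs ^ S d <= 2 ^ (Rs - 1))%nat.
Proof.
  set (s := (d + 4)%nat). exists (2 ^ s)%nat. split.
  - pose proof (Nat.pow_le_mono_r 2 0 s ltac:(lia) ltac:(lia)). simpl in H. lia.
  - rewrite <- Nat.pow_mul_r. rewrite <- Nat.pow_succ_r'.
    apply Nat.pow_le_mono_r; [lia|].
    pose proof (sq_le_pow2 s ltac:(unfold s; lia)). unfold s in *. nia.
Qed.

Lemma choose_T A e : exists T, (1 <= T)%nat /\ (A * T ^ e < 2 ^ T)%nat.
Proof.
  set (s := (A + e + 4)%nat). exists (2 ^ s)%nat. split.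
  - pose proof (Nat.pow_le_mono_r 2 0 s ltac:(lia) ltac:(lia)). simpl in H. lia.
  - rewrite <- Nat.pow_mul_r.
    pose proof (lt_pow2 A).
    assert (A * 2 ^ (s * e) < 2 ^ A * 2 ^ (s * e))%nat.
    { apply Nat.mul_lt_mono_pos_r; [|exact H]. pose proof (Nat.pow_le_mono_r 2 0 (s*e) ltac:(lia) ltac:(lia)). simpl in H0. lia. }
    eapply Nat.lt_le_trans; [exact H0|]. rewrite <- Nat.pow_add_r.
    apply Nat.pow_le_mono_r; [lia|].
    pose proof (sq_le_pow2 s ltac:(unfold s; lia)). unfold s in *. nia.
Qed.

Definition blk (v : nat -> nat) (n len : nat) : list nat := map (fun i => v (n + i)%nat) (seq 0 len).

Lemma occursb_blk v B n : occursb v B n = true -> blk v n (length B) = B.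
Proof.
  unfold occursb, blk. intros H. rewrite forallb_forall in H.
  apply nth_ext with (d := 0%nat) (d' := 0%nat).
  - rewrite length_map, length_seq. reflexivity.
  - intros i Hi. rewrite length_map, length_seq in Hi. rewrite nth_map_seq by lia.
    specialize (H i ltac:(apply in_seq; lia)). apply Nat.eqb_eq in H. exact H.
Qed.

Lemma blk_split v n a b : blk v n (a + b) = blk v n a ++ blk v (n + a) b.
Proof.
  unfold blk. rewrite seq_app, map_app. f_equal.
  pose proof (map_seq_shift (fun i => v (n + i)%nat) a b 0) as E. rewrite Nat.add_0_r in E.
  replace (0 + a)%nat with a by lia. rewrite E.
  apply map_ext. intros i. f_equal. lia.
Qed.

Lemma Un_cv_zero_const : Un_cv (fun _ : nat => 0) 0.
Proof. intros eps Heps. exists 0%nat. intros n _. unfold R_dist. rewrite Rminus_0_r, Rabs_R0. exact Heps. Qed.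


Lemma app_inv_len {A} : forall (a c b e : list A), length a = length c -> a ++ b = c ++ e -> a = c /\ b = e.
Proof.
  induction a as [|x a IH]; intros c b e Hl H.
  - destruct c; [auto|simpl in Hl; lia].
  - destruct c as [|y c]; [simpl in Hl; lia|]. simpl in H. injection H as -> H.
    destruct (IH c b e ltac:(simpl in Hl; lia) H). subst. auto.
Qed.

Lemma filter_all_false {A} (f : A -> bool) l : (forall x, f x = false) -> filter f l = [].
Proof. intros H. induction l; simpl; [reflexivity|]. rewrite H. exact IHl. Qed.

Theorem theorem2 (m : nat) (c : R) :
  (2 <= m)%nat -> 1 < c -> (forall z : Z, c <> IZR z) ->
  ~ normal m (floor_pow_mod m c) /\
  exists (k : nat) (B : list nat),
    (0 < k)%nat /\ is_block m k B /\
    forall n : nat, occursb (floor_pow_mod m c) B n = false.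
Proof.
  intros Hm Hc Hnz.
  set (v := floor_pow_mod m c).
  assert (Main : exists (k : nat) (B : list nat), (0 < k)%nat /\ is_block m k B /\
                   forall n : nat, occursb v B n = false).
  { destruct (base_Int_part c) as [I1 I2]. set (z := Int_part c) in *.
    assert (Hz1 : IZR z < c) by (destruct (Rle_lt_or_eq_dec _ _ I1) as [h|h]; [exact h|exfalso; apply (Hnz z); auto]).
    assert (Hz0 : (1 <= z)%Z) by (assert (0 < z)%Z by (apply lt_IZR; lra); lia).
    set (d := Z.to_nat z).
    assert (Hdz : INR d = IZR z) by (unfold d; rewrite INR_IZR_INZ, Z2Nat.id by lia; reflexivity).
    assert (Hd1 : INR d < c) by lra.
    assert (Hd2 : c < INR d + 1) by lra.
    destruct (choose_R d) as [Rs [HR1 HR2]].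
    set (A := ((m * 2 ^ (d + 4) * Rs ^ d) ^ S d)%nat). set (e := (d * S d)%nat).
    destruct (choose_T A e) as [T [HT1 HT2]].
    set (LL := (Rs * T)%nat).
    assert (HLL : (1 <= LL)%nat) by (unfold LL; nia).
    set (M := (2 ^ (d + 4) * LL ^ d)%nat).
    assert (HM16 : (16 <= M)%nat).
    { unfold M. pose proof (Nat.pow_le_mono_r 2 4 (d+4) ltac:(lia) ltac:(lia)).
      pose proof (Nat.pow_le_mono_l 1 LL d HLL). rewrite Nat.pow_1_l in H0. simpl in H. nia. }
    assert (HMr : INR M = 2 ^ (d + 4) * INR LL ^ d).
    { unfold M. rewrite mult_INR, !pow_INR. replace (INR 2) with 2 by (simpl; lra). reflexivity. }
    assert (HLr : 1 <= INR LL) by (apply (le_INR 1); exact HLL).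
    set (W := / 2 ^ (d + 3)).
    set (tau := / (INR M * INR LL)).
    assert (HMpos : 16 <= INR M) by (apply (le_INR 16) in HM16; simpl in HM16; lra).
    assert (Htau : 0 < tau) by (unfold tau; apply Rinv_0_lt_compat; nra).
    assert (Htau16 : tau <= / 16).
    { unfold tau. apply Rinv_le_contravar; [lra|nra]. }
    assert (H2d : 0 < 2 ^ (d + 3)) by (apply pow_lt; lra).
    assert (H2d4 : 2 ^ (d + 4) = 2 * 2 ^ (d + 3)) by (replace (d + 4)%nat with (S (d + 3)) by lia; reflexivity).
    assert (H2S : 2 ^ S d * 2 = 2 ^ (d + 2)).
    { replace (d + 2)%nat with (S (S d)) by lia. simpl. ring. }
    assert (H2d3 : 2 ^ (d + 3) = 2 * 2 ^ (d + 2)) by (replace (d + 3)%nat with (S (d + 2)) by lia; reflexivity).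
    destruct (analytic c d Hd1 Hd2 tau Htau) as [N0 [HN01 HN0]].
    assert (Hlarge : forall n, (N0 <= n)%nat -> In (blk v n LL) (BigList m d Rs T M W)).
    { intros n Hn.
      set (G := fun k => npow (n + k) c).
      assert (Eb : blk v n LL = map (fun k => Z.to_nat (Int_part (G k) mod Z.of_nat m)) (seq 0 (L Rs T)))
        by reflexivity.
      rewrite Eb. apply (large_block m d Rs T M W tau G).
      - lia.
      - lia.
      - unfold W. apply Rinv_0_lt_compat. exact H2d.
      - unfold W. rewrite H2d3.
        assert (Hx : 2 <= 2 ^ (d+2)) by (replace (d+2)%nat with (S (S d)) by lia; simpl;
          assert (1 <= 2^d) by (apply pow_R1_Rle; lra); lra).
        replace (2 * / (2 * 2 ^ (d + 2))) with (/ 2 ^ (d+2)) by (field; lra).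
        assert (/ 2 ^ (d+2) <= / 2) by (apply Rinv_le_contravar; lra). lra.
      - lra.
      - unfold W. rewrite H2d3. rewrite <- Rmult_assoc. rewrite H2S.
        assert (0 < 2 ^ (d+2)) by (apply pow_lt; lra).
        replace (2 ^ (d + 2) * / (2 * 2 ^ (d + 2))) with (/ 2) by (field; lra). lra.
      - intros k Hk. unfold L in Hk. fold LL in Hk.
        assert (Hk1 : INR (k + 1) <= INR LL) by (apply le_INR; lia).
        assert (Hk2 : INR k <= INR LL) by (apply le_INR; lia).
        assert (Hp : INR (k + 1) ^ d <= INR LL ^ d) by (apply pow_incr; split; [apply pos_INR|exact Hk1]).
        assert (HLd : 0 < INR LL ^ d) by (apply pow_lt; lra).
        assert (E1 : INR LL ^ d * / INR M = / 2 ^ (d + 4)) by (rewrite HMr; field; lra).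
        assert (E2 : INR LL ^ d * (INR LL * tau) = / 2 ^ (d + 4)) by (unfold tau; rewrite HMr; field; lra).
        assert (Hmid : INR (k + 1) ^ d * (/ INR M + INR k * tau) <= INR LL ^ d * (/ INR M + INR LL * tau)).
        { apply Rmult_le_compat; try apply pow_le; try apply pos_INR; try exact Hp.
          - assert (0 < / INR M) by (apply Rinv_0_lt_compat; lra). pose proof (pos_INR k). nra.
          - assert (INR k * tau <= INR LL * tau) by (apply Rmult_le_compat_r; lra). lra. }
        eapply Rle_trans; [exact Hmid|]. rewrite Rmult_plus_distr_l, E1, E2.
        unfold W. rewrite H2d4. rewrite Rinv_mult. lra.
      - intros j. destruct (HN0 n Hn j). unfold G. lra. }
    assert (Hlen : (length (BigList m d Rs T M W) < m ^ LL)%nat).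
    { eapply Nat.le_lt_trans; [apply BigList_len; auto|].
      assert (EA : ((m * M) ^ S d = A * T ^ e)%nat).
      { unfold A, e, M, LL. rewrite !Nat.pow_mul_l. rewrite <- !Nat.pow_mul_r. ring. }
      rewrite EA.
      assert (P1 : ((2 ^ T) * (2 ^ (Rs - 1)) ^ T <= m ^ LL)%nat).
      { rewrite <- Nat.pow_mul_l. rewrite <- Nat.pow_succ_r'. replace (S (Rs - 1)) with Rs by lia.
        unfold LL. rewrite Nat.pow_mul_r. apply Nat.pow_le_mono_l. apply Nat.pow_le_mono_l. lia. }
      assert (0 < (2 ^ (Rs - 1)) ^ T)%nat by (apply Nat.neq_0_lt_0; apply Nat.pow_nonzero; apply Nat.pow_nonzero; lia).
      nia. }
    destruct (pigeon LL m _ Hlen) as [B0 [HB0 HB0']].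
    set (l := map (fun n => blk v (n + LL) N0) (seq 0 N0)).
    assert (Hl : (length l < m ^ N0)%nat).
    { unfold l. rewrite length_map, length_seq. pose proof (lt_pow2 N0).
      pose proof (Nat.pow_le_mono_l 2 m N0 Hm). lia. }
    destruct (pigeon N0 m l Hl) as [w [Hw Hw']].
    destruct (allN_prop _ _ _ HB0) as [HB0l HB0e]. destruct (allN_prop _ _ _ Hw) as [Hwl Hwe].
    exists (LL + N0)%nat, (B0 ++ w). split; [lia|]. split.
    - split; [rewrite length_app; lia|]. apply Forall_forall. intros x Hx.
      apply in_app_or in Hx. destruct Hx; [apply HB0e|apply Hwe]; auto.
    - intros n. destruct (occursb v (B0 ++ w) n) eqn:E; [exfalso|reflexivity].
      apply occursb_blk in E. rewrite length_app, HB0l, Hwl, blk_split in E.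
      apply app_inv_len in E; [|unfold blk; rewrite length_map, length_seq; auto].
      destruct E as [E1 E2].
      destruct (le_lt_dec N0 n) as [h|h].
      + apply HB0'. rewrite <- E1. apply Hlarge. exact h.
      + apply Hw'. rewrite <- E2. unfold l.
        apply (in_map (fun n => blk v (n + LL) N0)). apply in_seq. lia. }
  split; [|exact Main].
  intros Hnorm. destruct Main as [k [B [Hk [Hblock Hocc]]]].
  specialize (Hnorm k Hk B Hblock).
  assert (Hz : Un_cv (fun N => INR (block_count v B N) / INR N) 0).
  { intros eps Heps. exists 0%nat. intros n _. unfold block_count.
    rewrite filter_all_false by exact Hocc. simpl. unfold R_dist, Rdiv.
    rewrite Rmult_0_l, Rminus_0_r, Rabs_R0. exact Heps. }
  pose proof (UL_sequence _ _ _ Hnorm Hz) as E.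
  assert (0 < INR m ^ k) by (apply pow_lt; apply lt_0_INR; lia).
  assert (0 < / (INR m ^ k)) by (apply Rinv_0_lt_compat; exact H).
  lra.
Qed.
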